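(* Let $R\subset S$ be an FCP ring extension and let $\mathcal E$ be the set of essential elements of $[R,S]$. Then $\mathcal S[R,S]=\bigcap_{E\in\mathcal E}E$, and $\mathcal S[R,S]$ is the least element of $\mathcal E$.
   Context: All rings are commutative with identity. $[R,S]$ is the lattice of $R$-subalgebras of $S$ (meet = intersection, join = product). FCP: every chain in $[R,S]$ is finite. $T\subset U$ minimal means $[T,U]=\{T,U\}$; an atom of $[R,S]$ is $T$ with $R\subset T$ minimal; the socle $\mathcal S[R,S]$ is the product of all atoms of $[R,S]$. An element $T\in[R,S]$ is essential if $T\neq R$ and $U\cap T\neq R$ for every $U\in[R,S]$ with $U\neq R$. *)

(* Defs.v *)
(* Subsets of S are Prop-valued predicates S -> Prop;
   equality of subalgebras is extensional equality of predicates. *)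
From Stdlib Require List.
From mathcomp Require Import all_boot all_algebra.
Set Implicit Arguments. Unset Strict Implicit. Unset Printing Implicit Defensive.
Import GRing.Theory.
Local Open Scope ring_scope.

Section RingExt.
Variable S : comPzRingType.

Definition subsetS (A B : S -> Prop) : Prop := forall x, A x -> B x.
Definition seteqS (A B : S -> Prop) : Prop := subsetS A B /\ subsetS B A.
Definition setTS : S -> Prop := fun _ => True.
Definition setIS (A B : S -> Prop) : S -> Prop := fun x => A x /\ B x.

Definition is_subring (A : S -> Prop) : Prop :=
  [/\ A 1, (forall x y, A x -> A y -> A (x - y))
         & (forall x y, A x -> A y -> A (x * y))].

Definition in_interval (R T : S -> Prop) : Prop := is_subring T /\ subsetS R T.

Definition minimal_in (R T U : S -> Prop) : Prop :=
  [/\ in_interval R T, in_interval R U, subsetS T U, ~ seteqS T U &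
      forall V, in_interval R V -> subsetS T V -> subsetS V U ->
        seteqS V T \/ seteqS V U].

Definition atom (R T : S -> Prop) : Prop := minimal_in R R T.

(* socle: product (= lattice join, i.e. R-subalgebra generated) of all atoms
   of [R,S]; the empty product is R. *)
Definition socle (R : S -> Prop) : S -> Prop :=
  fun x => forall U, in_interval R U -> (forall T, atom R T -> subsetS T U) -> U x.

Definition essential (R T : S -> Prop) : Prop :=
  [/\ in_interval R T, ~ seteqS T R &
      forall U, in_interval R U -> ~ seteqS U R -> ~ seteqS (setIS U T) R].

Definition chain_in (R : S -> Prop) (C : (S -> Prop) -> Prop) : Prop :=
  (forall T, C T -> in_interval R T) /\
  (forall T U, C T -> C U -> subsetS T U \/ subsetS U T).

Definition FCP (R : S -> Prop) : Prop :=
  forall C, chain_in R C ->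
    exists s : seq (S -> Prop), forall T, C T -> exists2 T', List.In T' s & seteqS T T'.

End RingExt.

(* Main.v *)
Require Import Defs.
From mathcomp Require Import all_boot all_algebra.
From mathcomp Require Import zify.
From Stdlib Require Import Classical IndefiniteDescription.
Local Open Scope ring_scope.
Set Implicit Arguments. Unset Strict Implicit.

Section Aux.
Variable S : comPzRingType.

Lemma seteq_sym (A B : S -> Prop) : seteqS A B -> seteqS B A.
Proof. by case. Qed.

Lemma seteq_trans (A B C : S -> Prop) : seteqS A B -> seteqS B C -> seteqS A C.
Proof. move=> [h1 h2] [h3 h4]; split=> x hx; auto. Qed.

Lemma no_inj (s : seq (S -> Prop)) : forall V : nat -> (S -> Prop),
  (forall i j, i <> j -> ~ seteqS (V i) (V j)) ->
  ~ (forall i, exists2 T', List.In T' s & seteqS (V i) T').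
Proof.
induction s as [|a s IH]; intros V Hd Hall.
- destruct (Hall 0%N) as [T' HT _]; exact HT.
- destruct (classic (exists i, seteqS (V i) a)) as [[i Hi]|Hn].
  + apply (IH (fun j => V (i + 1 + j)%N)).
    * intros j k Hjk. apply Hd. lia.
    * intros j. destruct (Hall (i+1+j)%N) as [T' [<-|HT] HT2].
      -- exfalso. apply (Hd i (i+1+j)%N). lia.
         exact: (seteq_trans Hi (seteq_sym HT2)).
      -- exists T'; auto.
  + apply (IH V Hd). intros j. destruct (Hall j) as [T' [<-|HT] HT2].
    * exfalso; apply Hn; exists j; exact HT2.
    * exists T'; auto.
Qed.

Lemma inter_in (R U E : S -> Prop) : in_interval R U -> in_interval R E ->
  in_interval R (Defs.setIS U E).
Proof.
move=> [[u1 u2 u3] uR] [[e1 e2 e3] eR]; split.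
  split; first by split.
  - by move=> x y [? ?] [? ?]; split; auto.
  - by move=> x y [? ?] [? ?]; split; auto.
by move=> x hx; split; auto.
Qed.

Lemma exists_atom (R U : S -> Prop) : is_subring R -> FCP R ->
  in_interval R U -> ~ seteqS U R -> exists A, atom R A /\ subsetS A U.
Proof.
move=> HR Hfcp HU HUR.
apply: NNPP => Hno.
pose P := fun V : S -> Prop => [/\ in_interval R V, ~ seteqS V R & subsetS V U].
have step : forall V, P V -> exists W, [/\ P W, subsetS W V & ~ seteqS W V].
  move=> V [HV HVR HVU].
  have nat : ~ atom R V.
    by move=> HA; apply: Hno; exists V; split.
  have Hrr : in_interval R R by split=> //; move=> x.
  have : ~ (forall W, in_interval R W -> subsetS R W -> subsetS W V ->
        seteqS W R \/ seteqS W V).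
    move=> H; apply: nat; split=> //; first by case: HV.
    by move/seteq_sym.
  move=> /not_all_ex_not [W HW].
  exists W.
  apply: NNPP => HW2; apply: (HW) => HWi HRW HWV.
  left; apply: NNPP => HWR.
  apply: HW2; split=> //.
    split=> // x hx; apply: HVU; exact: HWV.
  by move=> HWV'; apply: HW => _ _ _; right.
have ex : forall V, exists W, P V -> [/\ P W, subsetS W V & ~ seteqS W V].
  move=> V; case: (classic (P V)) => hP.
    by case: (step V hP) => W hW; exists W.
  by exists V.
pose f := fun V => proj1_sig (constructive_indefinite_description _ (ex V)).
have hf : forall V, P V -> [/\ P (f V), subsetS (f V) V & ~ seteqS (f V) V].
  move=> V; exact: (proj2_sig (constructive_indefinite_description _ (ex V))).
pose Vs := fun n => iter n f U.
have HP : forall n, P (Vs n).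
  elim=> [|n IH]; first by split=> // x.
  by case: (hf _ IH).
have Hdec : forall n k, subsetS (Vs (n + k)%N) (Vs n).
  move=> n; elim=> [|k IH]; first by rewrite addn0 => x.
  rewrite addnS => x hx; apply: IH.
  by case: (hf _ (HP (n + k)%N)) => _ h _; apply: h.
have Hle : forall n m, (n <= m)%N -> subsetS (Vs m) (Vs n).
  by move=> n m /subnKC <-; apply: Hdec.
have Hd : forall i j, i <> j -> ~ seteqS (Vs i) (Vs j).
  have H1 : forall i j, (i < j)%N -> ~ seteqS (Vs i) (Vs j).
    move=> i j hij [h1 h2].
    case: (hf _ (HP i)) => _ _; apply.
    split; first exact: (Hle i i.+1 (leqnSn i)).
    move=> x hx; apply: (Hle i.+1 j hij); exact: h1.
  move=> i j hij; case: (ltngtP i j) => h.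
  - exact: H1.
  - by move=> /seteq_sym; apply: H1.
  - by [].
have Hch : chain_in R (fun T => exists n, T = Vs n).
  split.
    by move=> T [n ->]; case: (HP n).
  move=> T T' [n ->] [m ->].
  case: (leqP n m) => h.
    by right; apply: Hle.
  by left; apply: Hle; apply: ltnW.
case: (Hfcp _ Hch) => s Hs.
apply: (no_inj Hd) => i.
by apply: Hs; exists i.
Qed.

End Aux.

Theorem proposition8p111 (S : comPzRingType) (R : S -> Prop) :
  is_subring R -> ~ seteqS R (@setTS S) -> FCP R ->
  (forall x, socle R x <-> (forall E, essential R E -> E x)) /\
  (essential R (socle R) /\ forall E, essential R E -> subsetS (socle R) E).
Proof.
move=> HR HRS Hfcp.
have atomE : forall A E, atom R A -> essential R E -> subsetS A E.
  move=> A E [_ HA _ HRA Hmin] [HE _ Hess].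
  have HAR : ~ seteqS A R by move/seteq_sym.
  have := Hess A HA HAR.
  case: (Hmin (Defs.setIS A E) (inter_in HA HE)).
  - by case: HA => _ h x hx; split; [apply: h | case: HE => _ h'; apply: h'].
  - by move=> x [].
  - by move=> h /(_ h).
  - by move=> [_ h] _ x hx; case: (h x hx).
have socE : forall E, essential R E -> subsetS (socle R) E.
  move=> E HE x hx; apply: hx; first by case: HE.
  by move=> T HT; apply: atomE.
have Hsoc_in : in_interval R (socle R).
  split.
    split.
    - by move=> U [[h1 _ _] _] _.
    - move=> x y hx hy U HU Ha.
      by case: (HU) => [[_ h _] _]; apply: h; [apply: hx | apply: hy].
    - move=> x y hx hy U HU Ha.
      by case: (HU) => [[_ _ h] _]; apply: h; [apply: hx | apply: hy].
  by move=> x hx U [_ h] _; apply: h.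
have atom_soc : forall A, atom R A -> subsetS A (socle R).
  by move=> A HA x hx U HU Ha; apply: (Ha A HA).
have ess : essential R (socle R).
  split=> //.
    have HT : in_interval R (@setTS S) by split=> //; split.
    have HTR : ~ seteqS (@setTS S) R by move/seteq_sym.
    case: (exists_atom HR Hfcp HT HTR) => A [HA _] [h1 _].
    case: (HA) => _ _ HRA' HRA _; apply: HRA; split.
      exact: HRA'.
    by move=> x hx; apply: h1; apply: (atom_soc A).
  move=> U HU HUR [h1 _].
  case: (exists_atom HR Hfcp HU HUR) => A [HA HAU].
  case: (HA) => _ HAi HRA' HRA _; apply: HRA; split.
    exact: HRA'.
  move=> x hx; apply: h1; split; first exact: HAU.
  by apply: (atom_soc A) => //; split.
split; last by split.
move=> x; split.
  by move=> hx E HE; apply: socE.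
by move=> h; apply: h.
Qed.
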